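(* Let $g_1,g_2$ be holomorphic functions on a domain $\mathcal{D}\subset\mathbb{C}$ with $g_1'g_2'\neq0$, let $\sqrt{g_1'g_2'}$ be a holomorphic branch, let $\Phi=\bigl(\tfrac{\mathrm{i}}{2}\tfrac{g_1g_2+1}{\sqrt{g_1'g_2'}},\ \tfrac12\tfrac{g_1g_2-1}{\sqrt{g_1'g_2'}},\ \tfrac12\tfrac{g_1+g_2}{\sqrt{g_1'g_2'}},\ \tfrac{\mathrm{i}}{2}\tfrac{g_1-g_2}{\sqrt{g_1'g_2'}}\bigr)$, let $\Psi$ be holomorphic on $\mathcal{D}$ with $\Psi'=\Phi$, and let $\mathcal{M}$ be the minimal surface $\mathrm{x}(u,v)=\operatorname{Re}\Psi(u+\mathrm{i}v)$ in $\mathbb{R}^4$. Then its first fundamental form is $E(du^2+dv^2)$ with $$E=\frac{(|g_1|^2+1)(|g_2|^2+1)}{4|g_1'g_2'|},$$ and its Gauss curvature $K$ and normal curvature $\varkappa$ are $$K=\frac{-8|g_1'g_2'|}{(|g_1|^2+1)(|g_2|^2+1)}\left(\frac{|g_1'|^2}{(|g_1|^2+1)^2}+\frac{|g_2'|^2}{(|g_2|^2+1)^2}\right),$$ $$\varkappa=\frac{8|g_1'g_2'|}{(|g_1|^2+1)(|g_2|^2+1)}\left(\frac{|g_1'|^2}{(|g_1|^2+1)^2}-\frac{|g_2'|^2}{(|g_2|^2+1)^2}\right).$$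
   Context: The normal curvature is defined as follows: let $X_1=\mathrm{x}_u/\|\mathrm{x}_u\|$, $X_2=\mathrm{x}_v/\|\mathrm{x}_v\|$, and let $n_1,n_2$ be orthonormal normal vector fields such that $(X_1,X_2,n_1,n_2)$ is a positively oriented orthonormal basis of $\mathbb{R}^4$ (standard orientation); with $A_n$ the Weingarten operator, $\varkappa=A_{n_1}X_1\cdot A_{n_2}X_2-A_{n_2}X_1\cdot A_{n_1}X_2$. *)

(* Defs.v *)
From Stdlib Require Import Reals.
From Coquelicot Require Import Coquelicot.
Open Scope R_scope.

Definition connected_set (D : C -> Prop) : Prop :=
  forall U V : C -> Prop, open U -> open V ->
    (forall z, D z -> U z \/ V z) ->
    (forall z, D z -> U z -> V z -> False) ->
    (forall z, D z -> ~ U z) \/ (forall z, D z -> ~ V z).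

Definition is_domain (D : C -> Prop) : Prop :=
  open D /\ (exists z, D z) /\ connected_set D.

Definition has_cderiv (f : C -> C) (z l : C) : Prop :=
  @is_derive C_AbsRing C_NormedModule f z l.

Definition holomorphic_on (D : C -> Prop) (f : C -> C) : Prop :=
  forall z, D z -> @ex_derive C_AbsRing C_NormedModule f z.

Definition V4 : Type := (R * R * R * R)%type.
Definition mk4 (a b c d : R) : V4 := (a, b, c, d).
Definition c1 (x : V4) : R := fst (fst (fst x)).
Definition c2 (x : V4) : R := snd (fst (fst x)).
Definition c3 (x : V4) : R := snd (fst x).
Definition c4 (x : V4) : R := snd x.

Definition dot4 (x y : V4) : R :=
  c1 x * c1 y + c2 x * c2 y + c3 x * c3 y + c4 x * c4 y.
Definition norm4 (x : V4) : R := sqrt (dot4 x x).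
Definition add4 (x y : V4) : V4 :=
  mk4 (c1 x + c1 y) (c2 x + c2 y) (c3 x + c3 y) (c4 x + c4 y).
Definition scal4 (a : R) (x : V4) : V4 :=
  mk4 (a * c1 x) (a * c2 x) (a * c3 x) (a * c4 x).

Definition det3 (x1 x2 x3 y1 y2 y3 z1 z2 z3 : R) : R :=
  x1 * (y2 * z3 - y3 * z2) - x2 * (y1 * z3 - y3 * z1) + x3 * (y1 * z2 - y2 * z1).

Definition det4 (a b c d : V4) : R :=
    c1 a * det3 (c2 b) (c3 b) (c4 b) (c2 c) (c3 c) (c4 c) (c2 d) (c3 d) (c4 d)
  - c2 a * det3 (c1 b) (c3 b) (c4 b) (c1 c) (c3 c) (c4 c) (c1 d) (c3 d) (c4 d)
  + c3 a * det3 (c1 b) (c2 b) (c4 b) (c1 c) (c2 c) (c4 c) (c1 d) (c2 d) (c4 d)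
  - c4 a * det3 (c1 b) (c2 b) (c3 b) (c1 c) (c2 c) (c3 c) (c1 d) (c2 d) (c3 d).

Definition pu (f : R -> R -> V4) (u v : R) : V4 :=
  mk4 (Derive (fun t => c1 (f t v)) u) (Derive (fun t => c2 (f t v)) u)
      (Derive (fun t => c3 (f t v)) u) (Derive (fun t => c4 (f t v)) u).
Definition pv (f : R -> R -> V4) (u v : R) : V4 :=
  mk4 (Derive (fun t => c1 (f u t)) v) (Derive (fun t => c2 (f u t)) v)
      (Derive (fun t => c3 (f u t)) v) (Derive (fun t => c4 (f u t)) v).

Definition partials_exist (f : R -> R -> V4) (u v : R) : Prop :=
  ex_derive (fun t => c1 (f t v)) u /\ ex_derive (fun t => c2 (f t v)) u /\
  ex_derive (fun t => c3 (f t v)) u /\ ex_derive (fun t => c4 (f t v)) u /\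
  ex_derive (fun t => c1 (f u t)) v /\ ex_derive (fun t => c2 (f u t)) v /\
  ex_derive (fun t => c3 (f u t)) v /\ ex_derive (fun t => c4 (f u t)) v.

Definition ffE (x : R -> R -> V4) u v : R := dot4 (pu x u v) (pu x u v).
Definition ffF (x : R -> R -> V4) u v : R := dot4 (pu x u v) (pv x u v).
Definition ffG (x : R -> R -> V4) u v : R := dot4 (pv x u v) (pv x u v).

Definition X1 (x : R -> R -> V4) u v : V4 := scal4 (/ norm4 (pu x u v)) (pu x u v).
Definition X2 (x : R -> R -> V4) u v : V4 := scal4 (/ norm4 (pv x u v)) (pv x u v).

Definition tang (x : R -> R -> V4) u v (w : V4) : V4 :=
  add4 (scal4 (dot4 w (X1 x u v)) (X1 x u v)) (scal4 (dot4 w (X2 x u v)) (X2 x u v)).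

(* Weingarten operator A_n : A_n X = - (D_X n)^T, evaluated on X1 and X2;
   D_{X1} n = n_u / |x_u|,  D_{X2} n = n_v / |x_v|. *)
Definition A_X1 (x n : R -> R -> V4) u v : V4 :=
  scal4 (-1) (tang x u v (scal4 (/ norm4 (pu x u v)) (pu n u v))).
Definition A_X2 (x n : R -> R -> V4) u v : V4 :=
  scal4 (-1) (tang x u v (scal4 (/ norm4 (pv x u v)) (pv n u v))).

Definition normal_frame (P : R -> R -> Prop) (x n1 n2 : R -> R -> V4) : Prop :=
  forall u v, P u v ->
    dot4 (n1 u v) (n1 u v) = 1 /\ dot4 (n2 u v) (n2 u v) = 1 /\
    dot4 (n1 u v) (n2 u v) = 0 /\
    dot4 (n1 u v) (X1 x u v) = 0 /\ dot4 (n1 u v) (X2 x u v) = 0 /\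
    dot4 (n2 u v) (X1 x u v) = 0 /\ dot4 (n2 u v) (X2 x u v) = 0 /\
    0 < det4 (X1 x u v) (X2 x u v) (n1 u v) (n2 u v) /\
    partials_exist n1 u v /\ partials_exist n2 u v.

Definition normal_curvature (x n1 n2 : R -> R -> V4) u v : R :=
  dot4 (A_X1 x n1 u v) (A_X2 x n2 u v) - dot4 (A_X1 x n2 u v) (A_X2 x n1 u v).

(* Gauss curvature via the Gauss equation:
   K = det A_{n1} + det A_{n2}  (matrices in the orthonormal basis X1, X2) *)
Definition detA (x n : R -> R -> V4) u v : R :=
  dot4 (A_X1 x n u v) (X1 x u v) * dot4 (A_X2 x n u v) (X2 x u v)
  - dot4 (A_X1 x n u v) (X2 x u v) * dot4 (A_X2 x n u v) (X1 x u v).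
Definition gauss_curvature (x n1 n2 : R -> R -> V4) u v : R :=
  detA x n1 u v + detA x n2 u v.

(* Main.v *)
Require Import Defs.
From Stdlib Require Import Reals.
From Coquelicot Require Import Coquelicot.
Open Scope R_scope.
From Stdlib Require Import Lra.
Require Import Defs.

Lemma C_ext (x y : C) : fst x = fst y -> snd x = snd y -> x = y.
Proof. destruct x, y; simpl; intros; subst; reflexivity. Qed.

Lemma ballR (x : R) (e : R) (y : R) : Rabs (y - x) < e -> @ball R_UniformSpace x e y.
Proof. intros H. exact H. Qed.

Lemma ballR' (x : R) (e : R) (y : R) : @ball R_UniformSpace x e y -> Rabs (y - x) < e.
Proof. intros H. exact H. Qed.

Lemma CmodR (t : R) : Cmod (RtoC t) = Rabs t.
Proof. unfold Cmod, RtoC; simpl. rewrite <- sqrt_Rsqr_abs. f_equal. unfold Rsqr; ring. Qed.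

Lemma loc_transfer (a w : C) (t0 : R) (P : C -> Prop) :
  Cmod w <= 1 ->
  @locally (AbsRing_UniformSpace C_AbsRing) (a + RtoC t0 * w)%C P -> locally t0 (fun t => P (a + RtoC t * w)%C).
Proof.
  intros Hm [e He]. exists e. intros t Ht. apply He.
  apply ballR' in Ht.
  change (Cmod ((a + RtoC t * w) - (a + RtoC t0 * w))%C < e).
  replace ((a + RtoC t * w) - (a + RtoC t0 * w))%C with (RtoC (t - t0) * w)%C
    by (apply C_ext; simpl; ring).
  rewrite Cmod_mult, CmodR. pose proof (Rabs_pos (t - t0)). pose proof (Cmod_ge_0 w). nra.
Qed.
Lemma dir_deriv (f : C -> C) (a w : C) (t0 : R) (l : C) :
  Cmod w <= 1 ->
  has_cderiv f (a + RtoC t0 * w)%C l ->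
  is_derive (fun t => Re (f (a + RtoC t * w)%C)) t0 (Re (l * w)) /\
  is_derive (fun t => Im (f (a + RtoC t * w)%C)) t0 (Im (l * w)).
Proof.
  intros Hm [_ Hd].
  set (z := (a + RtoC t0 * w)%C).
  assert (Hz : forall eps : posreal, locally t0 (fun t =>
     Cmod (f (a + RtoC t * w)%C - f z - (RtoC (t - t0) * w) * l)%C <= eps * Rabs (t - t0))).
  { intros eps. specialize (Hd z (fun P HP => HP) eps).
    apply loc_transfer in Hd; auto.
    eapply filter_imp; [|exact Hd]. intros t Ht. simpl in Ht.
    change (Cmod (f (a + RtoC t * w) - f z - (a + RtoC t * w - z) * l)%C <= eps * Cmod (a + RtoC t * w - z)%C) in Ht.
    assert (E1 : (a + RtoC t * w - z)%C = (RtoC (t - t0) * w)%C).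
    { unfold z; apply C_ext; simpl; ring. }
    rewrite E1 in Ht.
eapply Rle_trans; [exact Ht|].
    apply Rmult_le_compat_l; [destruct eps; simpl; lra|].
    rewrite Cmod_mult, CmodR. pose proof (Rabs_pos (t - t0)). nra. }
  assert (Hcommon : forall (pr : C -> R), (forall u, Rabs (pr u) <= Cmod u) ->
     (forall u v : C, pr (u - v)%C = pr u - pr v) ->
     (forall (r : R) (u : C), pr (RtoC r * u)%C = r * pr u) ->
     is_derive (fun t => pr (f (a + RtoC t * w)%C)) t0 (pr (l * w)%C)).
  { intros pr Hpr Hlin Hsc.
    split; [apply is_linear_scal_l|].
    intros x Hx; apply (@is_filter_lim_locally_unique R_AbsRing (AbsRing_NormedModule R_AbsRing)) in Hx; subst x.
    intros eps; eapply filter_imp; [| exact (Hz eps)]; intros t Ht.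
    eapply Rle_trans; [| exact Ht].
    eapply Rle_trans; [| apply Hpr].
    change (Rabs (pr (f (a + RtoC t * w)%C) - pr (f z) - (t - t0) * pr (l * w)%C) <=
      Rabs (pr (f (a + RtoC t * w) - f z - RtoC (t - t0) * w * l)%C)).
    right. f_equal. rewrite !Hlin. rewrite <- Cmult_assoc, Hsc, (Cmult_comm w l). reflexivity. }
  split; apply Hcommon.
  - intros u. eapply Rle_trans; [|apply Rmax_Cmod]. apply Rmax_l.
  - intros u v; unfold Re, Im, Cminus, Cplus, Copp; simpl; ring.
  - intros r u; unfold Re, Im, Cmult, RtoC; simpl; ring.
  - intros u. eapply Rle_trans; [|apply Rmax_Cmod]. apply Rmax_r.
  - intros u v; unfold Re, Im, Cminus, Cplus, Copp; simpl; ring.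
  - intros r u; unfold Re, Im, Cmult, RtoC; simpl; ring.
Qed.

Lemma loc_transfer_prod (a w : C) (t0 : R) (P : C -> Prop) :
  Rabs (Re w) <= 1 -> Rabs (Im w) <= 1 ->
  locally (a + RtoC t0 * w)%C P -> locally t0 (fun t => P (a + RtoC t * w)%C).
Proof.
  intros Hr Hi [e He]. exists e. intros t Ht. apply He.
  apply ballR' in Ht.
  split; apply ballR; simpl; unfold Re, Im in *.
  - replace (fst a + (t * fst w - 0 * snd w) - (fst a + (t0 * fst w - 0 * snd w)))
      with ((t - t0) * fst w) by ring.
    rewrite Rabs_mult. apply Rle_lt_trans with (Rabs (t - t0) * 1).
    apply Rmult_le_compat_l; [apply Rabs_pos| exact Hr]. lra.
  - replace (snd a + (t * snd w + 0 * fst w) - (snd a + (t0 * snd w + 0 * fst w)))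
      with ((t - t0) * snd w) by ring.
    rewrite Rabs_mult. apply Rle_lt_trans with (Rabs (t - t0) * 1).
    apply Rmult_le_compat_l; [apply Rabs_pos| exact Hi]. lra.
Qed.

Definition zz (u v : R) : C := (RtoC u + Ci * RtoC v)%C.

Lemma zz_u (t v : R) : zz t v = (Ci * RtoC v + RtoC t * 1)%C.
Proof. apply C_ext; unfold zz; simpl; ring. Qed.
Lemma zz_v (u t : R) : zz u t = (RtoC u + RtoC t * Ci)%C.
Proof. apply C_ext; unfold zz; simpl; ring. Qed.

Lemma loc_u (D : C -> Prop) u v : open D -> D (zz u v) -> locally u (fun t => D (zz t v)).
Proof.
  intros HD Hz. specialize (HD _ Hz). rewrite zz_u in HD.
  apply loc_transfer_prod in HD; [| simpl; rewrite Rabs_R1; lra | simpl; rewrite Rabs_R0; lra].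
  eapply filter_imp; [|exact HD]. intros t Ht. rewrite zz_u. exact Ht.
Qed.
Lemma loc_v (D : C -> Prop) u v : open D -> D (zz u v) -> locally v (fun t => D (zz u t)).
Proof.
  intros HD Hz. specialize (HD _ Hz). rewrite zz_v in HD.
  apply loc_transfer_prod in HD; [| simpl; rewrite Rabs_R0; lra | simpl; rewrite Rabs_R1; lra].
  eapply filter_imp; [|exact HD]. intros t Ht. rewrite zz_v. exact Ht.
Qed.

Lemma partial_u (f : C -> C) u v l : has_cderiv f (zz u v) l ->
  is_derive (fun t => Re (f (zz t v))) u (Re l) /\ is_derive (fun t => Im (f (zz t v))) u (Im l).
Proof.
  intros H. rewrite zz_u in H.
  destruct (dir_deriv f (Ci * RtoC v) 1 u l) as [H1 H2]; [rewrite Cmod_1; lra | exact H |].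
  split.
  - eapply is_derive_ext; [intros t; rewrite zz_u; reflexivity|].
    replace (Re l) with (Re (l * 1)%C) by (unfold Re; simpl; ring). exact H1.
  - eapply is_derive_ext; [intros t; rewrite zz_u; reflexivity|].
    replace (Im l) with (Im (l * 1)%C) by (unfold Im; simpl; ring). exact H2.
Qed.

Lemma partial_v (f : C -> C) u v l : has_cderiv f (zz u v) l ->
  is_derive (fun t => Re (f (zz u t))) v (- Im l) /\ is_derive (fun t => Im (f (zz u t))) v (Re l).
Proof.
  intros H. rewrite zz_v in H.
  destruct (dir_deriv f (RtoC u) Ci v l) as [H1 H2]; [rewrite Cmod_Ci; lra | exact H |].
  split.
  - eapply is_derive_ext; [intros t; rewrite zz_v; reflexivity|].
    replace (- Im l) with (Re (l * Ci)%C) by (unfold Re, Im; simpl; ring). exact H1.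
  - eapply is_derive_ext; [intros t; rewrite zz_v; reflexivity|].
    replace (Re l) with (Im (l * Ci)%C) by (unfold Re, Im; simpl; ring). exact H2.
Qed.

Lemma cd_conv f z l : has_cderiv f z l <-> @is_derive C_AbsRing (AbsRing_NormedModule C_AbsRing) f z l.
Proof. split; intros [_ H]; (split; [apply is_linear_scal_l|]); exact H. Qed.

Lemma cd_mult f g z df dg : has_cderiv f z df -> has_cderiv g z dg ->
  has_cderiv (fun w => f w * g w)%C z (df * g z + f z * dg)%C.
Proof.
  intros Hf Hg. apply cd_conv. apply cd_conv in Hf. apply cd_conv in Hg.
  exact (@is_derive_mult C_AbsRing f g z df dg Hf Hg Cmult_comm).
Qed.

Lemma cd_plus f g z df dg : has_cderiv f z df -> has_cderiv g z dg ->
  has_cderiv (fun w => f w + g w)%C z (df + dg)%C.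
Proof.
  intros Hf Hg. exact (@is_derive_plus C_AbsRing C_NormedModule f g z df dg Hf Hg).
Qed.

Lemma cd_const (c : C) z : has_cderiv (fun _ => c) z 0%C.
Proof. exact (@is_derive_const C_AbsRing C_NormedModule c z). Qed.

Lemma cd_opp f z df : has_cderiv f z df -> has_cderiv (fun w => - f w)%C z (- df)%C.
Proof.
  intros Hf. exact (@is_derive_opp C_AbsRing C_NormedModule f z df Hf).
Qed.

Lemma cd_eq f z l l' : has_cderiv f z l -> l = l' -> has_cderiv f z l'.
Proof. intros H E; subst; exact H. Qed.

Lemma cd_cmul (c : C) f z df : has_cderiv f z df -> has_cderiv (fun w => c * f w)%C z (c * df)%C.
Proof.
  intros Hf. eapply cd_eq; [apply (cd_mult (fun _ => c) f z 0%C df (cd_const c z) Hf)|].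
  apply C_ext; simpl; ring.
Qed.

Lemma is_derive_val (f : R -> R) x l l' : is_derive f x l -> l = l' -> is_derive f x l'.
Proof. intros H E; subst; exact H. Qed.

Lemma is_derive_dot4 (f g : R -> V4) t0 df dg :
  is_derive (fun t => c1 (f t)) t0 (c1 df) -> is_derive (fun t => c2 (f t)) t0 (c2 df) ->
  is_derive (fun t => c3 (f t)) t0 (c3 df) -> is_derive (fun t => c4 (f t)) t0 (c4 df) ->
  is_derive (fun t => c1 (g t)) t0 (c1 dg) -> is_derive (fun t => c2 (g t)) t0 (c2 dg) ->
  is_derive (fun t => c3 (g t)) t0 (c3 dg) -> is_derive (fun t => c4 (g t)) t0 (c4 dg) ->
  is_derive (fun t => dot4 (f t) (g t)) t0 (dot4 df (g t0) + dot4 (f t0) dg).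
Proof.
  intros F1 F2 F3 F4 G1 G2 G3 G4.
  pose proof (Derive.is_derive_mult _ _ _ _ _ F1 G1) as M1.
  pose proof (Derive.is_derive_mult _ _ _ _ _ F2 G2) as M2.
  pose proof (Derive.is_derive_mult _ _ _ _ _ F3 G3) as M3.
  pose proof (Derive.is_derive_mult _ _ _ _ _ F4 G4) as M4.
  pose proof (is_derive_plus _ _ _ _ _ M1 M2) as S12.
  pose proof (is_derive_plus _ _ _ _ _ S12 M3) as S123.
  pose proof (is_derive_plus _ _ _ _ _ S123 M4) as S.
  unfold dot4. eapply is_derive_val; [exact S|]. simpl. unfold plus; simpl. ring.
Qed.

Lemma deriv_zero_loc (f : R -> R) t0 l : is_derive f t0 l -> locally t0 (fun t => f t = 0) -> l = 0.
Proof.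
  intros H Hl.
  assert (H0 : is_derive (fun _ : R => 0) t0 l).
  { apply (is_derive_ext_loc f); [|exact H]. exact Hl. }
  pose proof (is_derive_unique _ _ _ H0) as E1.
  pose proof (is_derive_unique _ _ _ (is_derive_const (0:R) t0)) as E2.
  transitivity (Derive (fun _ : R => 0) t0); [symmetry; exact E1| exact E2].
Qed.
Open Scope R_scope.

Ltac d4 v := let a := fresh "a" in let b := fresh "b" in let c := fresh "c" in let d := fresh "d" in
  destruct v as [[[a b] c] d].
Ltac un4 := unfold det4, det3, dot4, add4, scal4, mk4, Defs.c1, Defs.c2, Defs.c3, Defs.c4 in *; simpl in *.

Lemma orth_zero (e1 e2 e3 e4 r : V4) :
  det4 e1 e2 e3 e4 <> 0 ->
  dot4 e1 r = 0 -> dot4 e2 r = 0 -> dot4 e3 r = 0 -> dot4 e4 r = 0 ->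
  c1 r = 0 /\ c2 r = 0 /\ c3 r = 0 /\ c4 r = 0.
Proof.
  intros Hd H1 H2 H3 H4.
  set (y := mk4 (dot4 e1 r) (dot4 e2 r) (dot4 e3 r) (dot4 e4 r)).
  set (k1 := mk4 (c1 e1) (c1 e2) (c1 e3) (c1 e4)).
  set (k2 := mk4 (c2 e1) (c2 e2) (c2 e3) (c2 e4)).
  set (k3 := mk4 (c3 e1) (c3 e2) (c3 e3) (c3 e4)).
  set (k4 := mk4 (c4 e1) (c4 e2) (c4 e3) (c4 e4)).
  assert (E1 : c1 r * det4 e1 e2 e3 e4 = det4 y k2 k3 k4) by (unfold y, k1, k2, k3, k4; d4 e1; d4 e2; d4 e3; d4 e4; d4 r; un4; ring).
  assert (E2 : c2 r * det4 e1 e2 e3 e4 = det4 k1 y k3 k4) by (unfold y, k1, k2, k3, k4; d4 e1; d4 e2; d4 e3; d4 e4; d4 r; un4; ring).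
  assert (E3 : c3 r * det4 e1 e2 e3 e4 = det4 k1 k2 y k4) by (unfold y, k1, k2, k3, k4; d4 e1; d4 e2; d4 e3; d4 e4; d4 r; un4; ring).
  assert (E4 : c4 r * det4 e1 e2 e3 e4 = det4 k1 k2 k3 y) by (unfold y, k1, k2, k3, k4; d4 e1; d4 e2; d4 e3; d4 e4; d4 r; un4; ring).
  assert (Y0 : y = mk4 0 0 0 0) by (unfold y; rewrite H1, H2, H3, H4; reflexivity).
  rewrite Y0 in E1, E2, E3, E4.
  assert (Z1 : det4 (mk4 0 0 0 0) k2 k3 k4 = 0) by (un4; ring).
  assert (Z2 : det4 k1 (mk4 0 0 0 0) k3 k4 = 0) by (un4; ring).
  assert (Z3 : det4 k1 k2 (mk4 0 0 0 0) k4 = 0) by (un4; ring).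
  assert (Z4 : det4 k1 k2 k3 (mk4 0 0 0 0) = 0) by (un4; ring).
  rewrite Z1 in E1; rewrite Z2 in E2; rewrite Z3 in E3; rewrite Z4 in E4.
  repeat split; [apply Rmult_integral in E1 | apply Rmult_integral in E2 | apply Rmult_integral in E3 | apply Rmult_integral in E4]; tauto.
Qed.

Definition lin4 (a1 : R) (e1 : V4) a2 e2 a3 e3 a4 e4 : V4 :=
  add4 (add4 (scal4 a1 e1) (scal4 a2 e2)) (add4 (scal4 a3 e3) (scal4 a4 e4)).

Definition orthonormal4 (e1 e2 e3 e4 : V4) : Prop :=
  dot4 e1 e1 = 1 /\ dot4 e2 e2 = 1 /\ dot4 e3 e3 = 1 /\ dot4 e4 e4 = 1 /\
  dot4 e1 e2 = 0 /\ dot4 e1 e3 = 0 /\ dot4 e1 e4 = 0 /\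
  dot4 e2 e3 = 0 /\ dot4 e2 e4 = 0 /\ dot4 e3 e4 = 0.

Lemma V4_ext (x y : V4) : c1 x = c1 y -> c2 x = c2 y -> c3 x = c3 y -> c4 x = c4 y -> x = y.
Proof. d4 x; d4 y; un4; intros; subst; reflexivity. Qed.

Lemma dot_sym (a b : V4) : dot4 a b = dot4 b a.
Proof. unfold dot4; ring. Qed.

Lemma dot_lin4 e a1 e1 a2 e2 a3 e3 a4 e4 :
  dot4 e (lin4 a1 e1 a2 e2 a3 e3 a4 e4) = a1 * dot4 e e1 + a2 * dot4 e e2 + a3 * dot4 e e3 + a4 * dot4 e e4.
Proof. unfold lin4, dot4, add4, scal4, mk4, Defs.c1, Defs.c2, Defs.c3, Defs.c4; simpl; ring. Qed.

Lemma dot_sub e w v : dot4 e (add4 w (scal4 (-1) v)) = dot4 e w - dot4 e v.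
Proof. unfold dot4, add4, scal4, mk4, Defs.c1, Defs.c2, Defs.c3, Defs.c4; simpl; ring. Qed.

Lemma expand (e1 e2 e3 e4 w : V4) :
  orthonormal4 e1 e2 e3 e4 -> det4 e1 e2 e3 e4 <> 0 ->
  w = lin4 (dot4 w e1) e1 (dot4 w e2) e2 (dot4 w e3) e3 (dot4 w e4) e4.
Proof.
  intros (H11 & H22 & H33 & H44 & H12 & H13 & H14 & H23 & H24 & H34) Hd.
  set (v := lin4 (dot4 w e1) e1 (dot4 w e2) e2 (dot4 w e3) e3 (dot4 w e4) e4).
  set (r := add4 w (scal4 (-1) v)).
  assert (Hr : c1 r = 0 /\ c2 r = 0 /\ c3 r = 0 /\ c4 r = 0).
  { apply (orth_zero e1 e2 e3 e4 r Hd); unfold r, v; rewrite dot_sub, dot_lin4.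
    - rewrite (dot_sym e1 w), H11, H12, H13, H14; ring.
    - rewrite (dot_sym e2 w), (dot_sym e2 e1), H22, H12, H23, H24; ring.
    - rewrite (dot_sym e3 w), (dot_sym e3 e1), (dot_sym e3 e2), H33, H13, H23, H34; ring.
    - rewrite (dot_sym e4 w), (dot_sym e4 e1), (dot_sym e4 e2), (dot_sym e4 e3), H44, H14, H24, H34; ring. }
  clearbody v. subst r. destruct Hr as (R1 & R2 & R3 & R4).
  revert R1 R2 R3 R4. d4 w; d4 v. unfold add4, scal4, mk4, Defs.c1, Defs.c2, Defs.c3, Defs.c4; simpl.
  intros. apply V4_ext; unfold Defs.c1, Defs.c2, Defs.c3, Defs.c4; simpl; lra.
Qed.

Lemma parseval (e1 e2 e3 e4 w : V4) :
  orthonormal4 e1 e2 e3 e4 -> det4 e1 e2 e3 e4 <> 0 ->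
  dot4 w w = (dot4 w e1)^2 + (dot4 w e2)^2 + (dot4 w e3)^2 + (dot4 w e4)^2.
Proof.
  intros Ho Hd. pose proof (expand e1 e2 e3 e4 w Ho Hd) as Hw.
  transitivity (dot4 w (lin4 (dot4 w e1) e1 (dot4 w e2) e2 (dot4 w e3) e3 (dot4 w e4) e4)).
  - rewrite <- Hw. reflexivity.
  - rewrite dot_lin4. ring.
Qed.

Lemma det_sq (e1 e2 e3 e4 : V4) :
  det4 e1 e2 e3 e4 * det4 e1 e2 e3 e4 =
  det4 (mk4 (dot4 e1 e1) (dot4 e2 e1) (dot4 e3 e1) (dot4 e4 e1))
       (mk4 (dot4 e1 e2) (dot4 e2 e2) (dot4 e3 e2) (dot4 e4 e2))
       (mk4 (dot4 e1 e3) (dot4 e2 e3) (dot4 e3 e3) (dot4 e4 e3))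
       (mk4 (dot4 e1 e4) (dot4 e2 e4) (dot4 e3 e4) (dot4 e4 e4)).
Proof. d4 e1; d4 e2; d4 e3; d4 e4; un4; ring. Qed.

Lemma det_one (e1 e2 e3 e4 : V4) :
  orthonormal4 e1 e2 e3 e4 -> 0 < det4 e1 e2 e3 e4 -> det4 e1 e2 e3 e4 = 1.
Proof.
  intros Ho Hp. pose proof (det_sq e1 e2 e3 e4) as Hs.
  destruct Ho as (H11 & H22 & H33 & H44 & H12 & H13 & H14 & H23 & H24 & H34).
  rewrite (dot_sym e2 e1), (dot_sym e3 e1), (dot_sym e4 e1), (dot_sym e3 e2), (dot_sym e4 e2), (dot_sym e4 e3) in Hs.
  rewrite H11, H22, H33, H44, H12, H13, H14, H23, H24, H34 in Hs.
  revert Hs Hp. generalize (det4 e1 e2 e3 e4). intros D Hs Hp.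
  unfold det4, det3, mk4, Defs.c1, Defs.c2, Defs.c3, Defs.c4 in Hs; simpl in Hs. nra.
Qed.

Lemma det_multi (e1 e2 e3 e4 : V4) a1 a2 a3 a4 b1 b2 b3 b4 :
  det4 e1 e2 (lin4 a1 e1 a2 e2 a3 e3 a4 e4) (lin4 b1 e1 b2 e2 b3 e3 b4 e4)
  = (a3 * b4 - a4 * b3) * det4 e1 e2 e3 e4.
Proof. unfold lin4; d4 e1; d4 e2; d4 e3; d4 e4; un4; ring. Qed.

Definition lin2 (a : R) (A : V4) (b : R) (B : V4) : V4 := add4 (scal4 a A) (scal4 b B).

Lemma dot_lin2 N a A b B : dot4 N (lin2 a A b B) = a * dot4 N A + b * dot4 N B.
Proof. unfold lin2, dot4, add4, scal4, mk4, Defs.c1, Defs.c2, Defs.c3, Defs.c4; simpl; ring. Qed.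
Lemma dot_lin2l N a A b B : dot4 (lin2 a A b B) N = a * dot4 A N + b * dot4 B N.
Proof. unfold lin2, dot4, add4, scal4, mk4, Defs.c1, Defs.c2, Defs.c3, Defs.c4; simpl; ring. Qed.
Lemma dot_scal_l k A B : dot4 (scal4 k A) B = k * dot4 A B.
Proof. unfold dot4, scal4, mk4, Defs.c1, Defs.c2, Defs.c3, Defs.c4; simpl; ring. Qed.
Lemma dot_scal_r k A B : dot4 A (scal4 k B) = k * dot4 A B.
Proof. unfold dot4, scal4, mk4, Defs.c1, Defs.c2, Defs.c3, Defs.c4; simpl; ring. Qed.
Lemma scal_scal k m A : scal4 k (scal4 m A) = scal4 (k * m) A.
Proof. apply V4_ext; unfold scal4, mk4, Defs.c1, Defs.c2, Defs.c3, Defs.c4; simpl; ring. Qed.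
Lemma scal_add k A B : scal4 k (add4 A B) = add4 (scal4 k A) (scal4 k B).
Proof. apply V4_ext; unfold add4, scal4, mk4, Defs.c1, Defs.c2, Defs.c3, Defs.c4; simpl; ring. Qed.

Lemma shape (x n : R -> R -> V4) u v P Q L al be :
  pu x u v = P -> pv x u v = Q -> dot4 P P = L -> dot4 Q Q = L -> 0 < L ->
  dot4 (pu n u v) P = - al -> dot4 (pu n u v) Q = - be ->
  dot4 (pv n u v) P = - be -> dot4 (pv n u v) Q = al ->
  X1 x u v = scal4 (/ sqrt L) P /\ X2 x u v = scal4 (/ sqrt L) Q /\
  A_X1 x n u v = lin2 (al / (L * sqrt L)) P (be / (L * sqrt L)) Q /\
  A_X2 x n u v = lin2 (be / (L * sqrt L)) P (- al / (L * sqrt L)) Q.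
Proof.
  intros Hu Hv HP HQ HL H1 H2 H3 H4.
  assert (Hs : sqrt L * sqrt L = L) by (apply sqrt_sqrt; lra).
  assert (Hs0 : 0 < sqrt L) by (apply sqrt_lt_R0; lra).
  assert (N1 : norm4 (pu x u v) = sqrt L) by (unfold norm4; rewrite Hu, HP; reflexivity).
  assert (N2 : norm4 (pv x u v) = sqrt L) by (unfold norm4; rewrite Hv, HQ; reflexivity).
  assert (EX1 : X1 x u v = scal4 (/ sqrt L) P) by (unfold X1; rewrite N1, Hu; reflexivity).
  assert (EX2 : X2 x u v = scal4 (/ sqrt L) Q) by (unfold X2; rewrite N2, Hv; reflexivity).
  split; [exact EX1|]. split; [exact EX2|].
  unfold A_X1, A_X2, tang. rewrite EX1, EX2, N1, N2.
  rewrite !dot_scal_l, !dot_scal_r, H1, H2, H3, H4.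
  unfold lin2. rewrite !scal_add, !scal_scal.
  set (sL := sqrt L) in *. rewrite <- Hs.
  split; f_equal; f_equal; field; lra.
Qed.

Lemma det_scal12 k A B C D : det4 (scal4 k A) (scal4 k B) C D = k * k * det4 A B C D.
Proof. d4 A; d4 B; d4 C; d4 D; un4; ring. Qed.

Lemma curv_alg (x n1 n2 : R -> R -> V4) u v P Q RU IU L :
  pu x u v = P -> pv x u v = Q -> dot4 P P = L -> dot4 Q Q = L -> dot4 P Q = 0 -> 0 < L ->
  (forall n, n = n1 \/ n = n2 ->
    dot4 (pu n u v) P = - dot4 (n u v) RU /\ dot4 (pu n u v) Q = dot4 (n u v) IU /\
    dot4 (pv n u v) P = dot4 (n u v) IU /\ dot4 (pv n u v) Q = dot4 (n u v) RU) ->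
  dot4 (n1 u v) (n1 u v) = 1 -> dot4 (n2 u v) (n2 u v) = 1 -> dot4 (n1 u v) (n2 u v) = 0 ->
  dot4 (n1 u v) (X1 x u v) = 0 -> dot4 (n1 u v) (X2 x u v) = 0 ->
  dot4 (n2 u v) (X1 x u v) = 0 -> dot4 (n2 u v) (X2 x u v) = 0 ->
  0 < det4 (X1 x u v) (X2 x u v) (n1 u v) (n2 u v) ->
  gauss_curvature x n1 n2 u v =
    - ((dot4 RU RU + dot4 IU IU) * L
       - ((dot4 RU P)^2 + (dot4 RU Q)^2 + (dot4 IU P)^2 + (dot4 IU Q)^2)) / L^3 /\
  normal_curvature x n1 n2 u v = - 2 * det4 P Q RU IU / L^3.
Proof.
  intros Hu Hv HP HQ HPQ HL Hn H11 H22 H12 H1X1 H1X2 H2X1 H2X2 Hdet.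
  destruct (Hn n1 (or_introl eq_refl)) as (a1 & a2 & a3 & a4).
  destruct (Hn n2 (or_intror eq_refl)) as (b1 & b2 & b3 & b4).
  assert (HQP : dot4 Q P = 0) by (rewrite dot_sym; exact HPQ).
  destruct (shape x n1 u v P Q L (dot4 (n1 u v) RU) (- dot4 (n1 u v) IU) Hu Hv HP HQ HL)
    as (EX1 & EX2 & A1 & A2); try rewrite a1; try rewrite a2; try rewrite a3; try rewrite a4; try ring.
  destruct (shape x n2 u v P Q L (dot4 (n2 u v) RU) (- dot4 (n2 u v) IU) Hu Hv HP HQ HL)
    as (_ & _ & B1 & B2); try rewrite b1; try rewrite b2; try rewrite b3; try rewrite b4; try ring.
  assert (Hs : sqrt L * sqrt L = L) by (apply sqrt_sqrt; lra).
  assert (Hs0 : 0 < sqrt L) by (apply sqrt_lt_R0; lra).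
  rewrite EX1, EX2 in *.
  assert (Ho : orthonormal4 (scal4 (/ sqrt L) P) (scal4 (/ sqrt L) Q) (n1 u v) (n2 u v)).
  { unfold orthonormal4. rewrite !dot_scal_l, !dot_scal_r, HP, HQ, HPQ.
    rewrite (dot_sym P (n1 u v)), (dot_sym P (n2 u v)), (dot_sym Q (n1 u v)), (dot_sym Q (n2 u v)).
    rewrite !dot_scal_r in H1X1, H1X2, H2X1, H2X2.
    assert (dot4 (n1 u v) P = 0) by (apply Rmult_eq_reg_l with (/ sqrt L); [lra| apply Rinv_neq_0_compat; lra]).
    assert (dot4 (n1 u v) Q = 0) by (apply Rmult_eq_reg_l with (/ sqrt L); [lra| apply Rinv_neq_0_compat; lra]).
    assert (dot4 (n2 u v) P = 0) by (apply Rmult_eq_reg_l with (/ sqrt L); [lra| apply Rinv_neq_0_compat; lra]).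
    assert (dot4 (n2 u v) Q = 0) by (apply Rmult_eq_reg_l with (/ sqrt L); [lra| apply Rinv_neq_0_compat; lra]).
    repeat split; try assumption;
      repeat match goal with H : dot4 _ _ = 0 |- _ => rewrite H end;
      try ring;
      (set (sL := sqrt L) in *; rewrite <- Hs; field; lra). }
  pose proof (det_one _ _ _ _ Ho Hdet) as D1.
  assert (Dn : det4 (scal4 (/ sqrt L) P) (scal4 (/ sqrt L) Q) (n1 u v) (n2 u v) <> 0) by lra.
  pose proof (parseval _ _ _ _ RU Ho Dn) as PR.
  pose proof (parseval _ _ _ _ IU Ho Dn) as PI.
  rewrite !dot_scal_r in PR, PI.
  rewrite (dot_sym RU (n1 u v)), (dot_sym RU (n2 u v)) in PR.
  rewrite (dot_sym IU (n1 u v)), (dot_sym IU (n2 u v)) in PI.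
  split.
  - unfold gauss_curvature, detA. rewrite A1, A2, B1, B2, EX1, EX2.
    rewrite !dot_lin2l, !dot_scal_r, HP, HQ, HPQ, HQP.
    rewrite PR, PI.
    set (sL := sqrt L) in *. rewrite <- Hs. field. lra.
  - unfold normal_curvature. rewrite A1, A2, B1, B2.
    rewrite !dot_lin2l, !dot_lin2, HP, HQ, HPQ, HQP.
    pose proof (expand _ _ _ _ RU Ho Dn) as XR.
    pose proof (expand _ _ _ _ IU Ho Dn) as XI.
    assert (DD : det4 (scal4 (/ sqrt L) P) (scal4 (/ sqrt L) Q) RU IU =
       (dot4 RU (n1 u v) * dot4 IU (n2 u v) - dot4 RU (n2 u v) * dot4 IU (n1 u v)) * 1).
    { rewrite <- D1. rewrite XR at 1. rewrite XI at 1. apply det_multi. }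
    rewrite det_scal12, Rmult_1_r in DD.
    rewrite (dot_sym RU (n1 u v)), (dot_sym RU (n2 u v)), (dot_sym IU (n1 u v)), (dot_sym IU (n2 u v)) in DD.
    assert (Hdd : det4 P Q RU IU = L * (dot4 (n1 u v) RU * dot4 (n2 u v) IU - dot4 (n2 u v) RU * dot4 (n1 u v) IU)).
    { set (sL := sqrt L) in *. rewrite <- Hs. rewrite <- DD. field. lra. }
    rewrite Hdd.
    set (sL := sqrt L) in *. rewrite <- Hs. field. lra.
Qed.
Definition RV x1 y1 x2 y2 : V4 := mk4 (-(x1*y2+x2*y1)/2) ((x1*x2-y1*y2-1)/2) ((x1+x2)/2) (-(y1-y2)/2).
Definition IV x1 y1 x2 y2 : V4 := mk4 ((x1*x2-y1*y2+1)/2) ((x1*y2+x2*y1)/2) ((y1+y2)/2) ((x1-x2)/2).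
Definition Dr x1 y1 x2 y2 p1 q1 p2 q2 := p1*x2 - q1*y2 + x1*p2 - y1*q2.
Definition Di x1 y1 x2 y2 p1 q1 p2 q2 := p1*y2 + q1*x2 + x1*q2 + y1*p2.
Definition RW x1 y1 x2 y2 p1 q1 p2 q2 : V4 :=
  mk4 (-(Di x1 y1 x2 y2 p1 q1 p2 q2)/2) (Dr x1 y1 x2 y2 p1 q1 p2 q2/2) ((p1+p2)/2) (-(q1-q2)/2).
Definition IW x1 y1 x2 y2 p1 q1 p2 q2 : V4 :=
  mk4 (Dr x1 y1 x2 y2 p1 q1 p2 q2/2) (Di x1 y1 x2 y2 p1 q1 p2 q2/2) ((q1+q2)/2) ((p1-p2)/2).

Lemma dotP x1 y1 x2 y2 c d :
  let P := lin2 c (RV x1 y1 x2 y2) (-d) (IV x1 y1 x2 y2) in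
  let Q := lin2 (-d) (RV x1 y1 x2 y2) (-c) (IV x1 y1 x2 y2) in
  dot4 P P = (x1^2+y1^2+1)*(x2^2+y2^2+1)*(c^2+d^2)/4 /\
  dot4 Q Q = (x1^2+y1^2+1)*(x2^2+y2^2+1)*(c^2+d^2)/4 /\ dot4 P Q = 0.
Proof. simpl. unfold dot4, lin2, add4, scal4, RV, IV, mk4, Defs.c1, c2, c3, c4; simpl. repeat split; field. Qed.

Lemma Kcore x1 y1 x2 y2 p1 q1 p2 q2 c d :
  let P := lin2 c (RV x1 y1 x2 y2) (-d) (IV x1 y1 x2 y2) in
  let Q := lin2 (-d) (RV x1 y1 x2 y2) (-c) (IV x1 y1 x2 y2) in
  let RU := lin2 c (RW x1 y1 x2 y2 p1 q1 p2 q2) (-d) (IW x1 y1 x2 y2 p1 q1 p2 q2) in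
  let IU := lin2 d (RW x1 y1 x2 y2 p1 q1 p2 q2) c (IW x1 y1 x2 y2 p1 q1 p2 q2) in
  (dot4 RU RU + dot4 IU IU) * dot4 P P
   - ((dot4 RU P)^2 + (dot4 RU Q)^2 + (dot4 IU P)^2 + (dot4 IU Q)^2)
  = (c^2+d^2)^2 * ((p1^2+q1^2)*(x2^2+y2^2+1)^2 + (p2^2+q2^2)*(x1^2+y1^2+1)^2)/8.
Proof. simpl. unfold dot4, lin2, add4, scal4, RW, IW, Dr, Di, RV, IV, mk4, Defs.c1, c2, c3, c4; simpl. field. Qed.

Lemma Dcore x1 y1 x2 y2 p1 q1 p2 q2 c d :
  let P := lin2 c (RV x1 y1 x2 y2) (-d) (IV x1 y1 x2 y2) in
  let Q := lin2 (-d) (RV x1 y1 x2 y2) (-c) (IV x1 y1 x2 y2) in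
  let RU := lin2 c (RW x1 y1 x2 y2 p1 q1 p2 q2) (-d) (IW x1 y1 x2 y2 p1 q1 p2 q2) in
  let IU := lin2 d (RW x1 y1 x2 y2 p1 q1 p2 q2) c (IW x1 y1 x2 y2 p1 q1 p2 q2) in
  det4 P Q RU IU
  = - (c^2+d^2)^2 * ((p1^2+q1^2)*(x2^2+y2^2+1)^2 - (p2^2+q2^2)*(x1^2+y1^2+1)^2)/16.
Proof. simpl. unfold det4, det3, lin2, add4, scal4, RW, IW, Dr, Di, RV, IV, mk4, Defs.c1, c2, c3, c4; simpl. field. Qed.

Definition F1 (a b : C) : C := (Ci / 2 * (a * b + 1))%C.
Definition F2 (a b : C) : C := (/ 2 * (a * b - 1))%C.
Definition F3 (a b : C) : C := (/ 2 * (a + b))%C.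
Definition F4 (a b : C) : C := (Ci / 2 * (a - b))%C.
Definition G1 (a b da db : C) : C := (Ci / 2 * (da * b + a * db))%C.
Definition G2 (a b da db : C) : C := (/ 2 * (da * b + a * db))%C.
Definition G3 (a b da db : C) : C := (/ 2 * (da + db))%C.
Definition G4 (a b da db : C) : C := (Ci / 2 * (da - db))%C.

Definition RVc (a b : C) := RV (Re a) (Im a) (Re b) (Im b).
Definition IVc (a b : C) := IV (Re a) (Im a) (Re b) (Im b).
Definition RWc (a b da db : C) := RW (Re a) (Im a) (Re b) (Im b) (Re da) (Im da) (Re db) (Im db).
Definition IWc (a b da db : C) := IW (Re a) (Im a) (Re b) (Im b) (Re da) (Im da) (Re db) (Im db).

Ltac cunf := unfold F1, F2, F3, F4, G1, G2, G3, G4, RVc, IVc, RWc, IWc, RV, IV, RW, IW, Dr, Di,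
  lin2, add4, scal4, mk4, Defs.c1, Defs.c2, Defs.c3, Defs.c4, Re, Im, Cdiv, Cinv, Cmult, Cplus, Cminus, Copp, Ci, RtoC; simpl.

Lemma RV_F a b : RVc a b = mk4 (Re (F1 a b)) (Re (F2 a b)) (Re (F3 a b)) (Re (F4 a b)).
Proof. destruct a, b; apply V4_ext; cunf; field. Qed.
Lemma IV_F a b : IVc a b = mk4 (Im (F1 a b)) (Im (F2 a b)) (Im (F3 a b)) (Im (F4 a b)).
Proof. destruct a, b; apply V4_ext; cunf; field. Qed.
Lemma RW_G a b da db : RWc a b da db = mk4 (Re (G1 a b da db)) (Re (G2 a b da db)) (Re (G3 a b da db)) (Re (G4 a b da db)).
Proof. destruct a, b, da, db; apply V4_ext; cunf; field. Qed.
Lemma IW_G a b da db : IWc a b da db = mk4 (Im (G1 a b da db)) (Im (G2 a b da db)) (Im (G3 a b da db)) (Im (G4 a b da db)).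
Proof. destruct a, b, da, db; apply V4_ext; cunf; field. Qed.

Lemma Phi_P a b sv :
  mk4 (Re (Ci / 2 * ((a * b + 1) / sv))%C) (Re (/ 2 * ((a * b - 1) / sv))%C)
      (Re (/ 2 * ((a + b) / sv))%C) (Re (Ci / 2 * ((a - b) / sv))%C)
  = lin2 (Re (/ sv)%C) (RVc a b) (- Im (/ sv)%C) (IVc a b).
Proof.
  unfold Cdiv. generalize (Cinv sv). intros [c d]. destruct a, b. apply V4_ext; cunf; field.
Qed.

Lemma Phi_Q a b sv :
  mk4 (- Im (Ci / 2 * ((a * b + 1) / sv))%C) (- Im (/ 2 * ((a * b - 1) / sv))%C)
      (- Im (/ 2 * ((a + b) / sv))%C) (- Im (Ci / 2 * ((a - b) / sv))%C)
  = lin2 (- Im (/ sv)%C) (RVc a b) (- Re (/ sv)%C) (IVc a b).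
Proof.
  unfold Cdiv. generalize (Cinv sv). intros [c d]. destruct a, b. apply V4_ext; cunf; field.
Qed.

Lemma cd_minus f g z df dg : has_cderiv f z df -> has_cderiv g z dg ->
  has_cderiv (fun w => f w - g w)%C z (df - dg)%C.
Proof. intros Hf Hg. exact (cd_plus f (fun w => - g w)%C z df (- dg)%C Hf (cd_opp g z dg Hg)). Qed.

Lemma cd_F (g1 g2 : C -> C) z d1 d2 : has_cderiv g1 z d1 -> has_cderiv g2 z d2 ->
  has_cderiv (fun w => F1 (g1 w) (g2 w)) z (G1 (g1 z) (g2 z) d1 d2) /\
  has_cderiv (fun w => F2 (g1 w) (g2 w)) z (G2 (g1 z) (g2 z) d1 d2) /\
  has_cderiv (fun w => F3 (g1 w) (g2 w)) z (G3 (g1 z) (g2 z) d1 d2) /\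
  has_cderiv (fun w => F4 (g1 w) (g2 w)) z (G4 (g1 z) (g2 z) d1 d2).
Proof.
  intros H1 H2.
  pose proof (cd_mult _ _ _ _ _ H1 H2) as M.
  unfold F1, F2, F3, F4. split; [|split; [|split]].
  - eapply cd_eq; [apply (cd_cmul (Ci/2)%C), cd_plus; [exact M | apply cd_const]|].
    apply C_ext; cunf; field.
  - eapply cd_eq; [apply (cd_cmul (/2)%C); apply (cd_minus (fun w => (g1 w * g2 w)%C) (fun _ => 1%C)); [exact M | apply cd_const]|].
    apply C_ext; cunf; field.
  - eapply cd_eq; [apply (cd_cmul (/2)%C), cd_plus; [exact H1 | exact H2]|].
    apply C_ext; cunf; field.
  - eapply cd_eq; [apply (cd_cmul (Ci/2)%C); apply cd_minus; [exact H1 | exact H2]|].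
    apply C_ext; cunf; field.
Qed.

Lemma Derive_u_re (f : C -> C) u v l : has_cderiv f (zz u v) l ->
  Derive (fun t => Re (f (zz t v))) u = Re l.
Proof. intros H. apply is_derive_unique. apply (partial_u f u v l H). Qed.
Lemma Derive_v_re (f : C -> C) u v l : has_cderiv f (zz u v) l ->
  Derive (fun t => Re (f (zz u t))) v = - Im l.
Proof. intros H. apply is_derive_unique. apply (partial_v f u v l H). Qed.

Lemma Cmod2 (w : C) : Cmod w ^ 2 = Re w ^ 2 + Im w ^ 2.
Proof.
  unfold Cmod, Re, Im. rewrite pow2_sqrt; [reflexivity|].
  pose proof (pow2_ge_0 (fst w)); pose proof (pow2_ge_0 (snd w)); lra.
Qed.

Lemma C_nz (w : C) : w <> 0%C -> 0 < Re w ^ 2 + Im w ^ 2.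
Proof.
  intros H. destruct w as [a b]. unfold Re, Im; simpl.
  destruct (Req_dec a 0); destruct (Req_dec b 0); subst.
  - exfalso; apply H; reflexivity.
  - pose proof (pow2_gt_0 b H1). nra.
  - pose proof (pow2_gt_0 a H0). nra.
  - pose proof (pow2_gt_0 a H0). nra.
Qed.

Lemma inv_mod (w : C) : w <> 0%C -> Re (/ w)%C ^ 2 + Im (/ w)%C ^ 2 = / (Re w ^ 2 + Im w ^ 2).
Proof.
  intros H. pose proof (C_nz w H). destruct w as [a b]. unfold Re, Im in *; simpl in *.
  field. lra.
Qed.

Lemma n_deriv (n : R -> R -> V4) u v : partials_exist n u v ->
  (is_derive (fun t => c1 (n t v)) u (c1 (pu n u v)) /\ is_derive (fun t => c2 (n t v)) u (c2 (pu n u v)) /\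
   is_derive (fun t => c3 (n t v)) u (c3 (pu n u v)) /\ is_derive (fun t => c4 (n t v)) u (c4 (pu n u v))) /\
  (is_derive (fun t => c1 (n u t)) v (c1 (pv n u v)) /\ is_derive (fun t => c2 (n u t)) v (c2 (pv n u v)) /\
   is_derive (fun t => c3 (n u t)) v (c3 (pv n u v)) /\ is_derive (fun t => c4 (n u t)) v (c4 (pv n u v))).
Proof.
  intros (E1 & E2 & E3 & E4 & E5 & E6 & E7 & E8).
  split; repeat split; apply Derive_correct; assumption.
Qed.

Lemma V_deriv (g1 g2 dg1 dg2 : C -> C) u v :
  has_cderiv g1 (zz u v) (dg1 (zz u v)) -> has_cderiv g2 (zz u v) (dg2 (zz u v)) ->
  let a := g1 (zz u v) in let b := g2 (zz u v) in
  let da := dg1 (zz u v) in let db := dg2 (zz u v) in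
  (forall k, k = 1%nat \/ k = 2%nat \/ k = 3%nat \/ k = 4%nat ->
   let ck := match k with 1%nat => c1 | 2%nat => c2 | 3%nat => c3 | _ => c4 end in
   is_derive (fun t => ck (RVc (g1 (zz t v)) (g2 (zz t v)))) u (ck (RWc a b da db)) /\
   is_derive (fun t => ck (IVc (g1 (zz t v)) (g2 (zz t v)))) u (ck (IWc a b da db)) /\
   is_derive (fun t => ck (RVc (g1 (zz u t)) (g2 (zz u t)))) v (ck (scal4 (-1) (IWc a b da db))) /\
   is_derive (fun t => ck (IVc (g1 (zz u t)) (g2 (zz u t)))) v (ck (RWc a b da db))).
Proof.
  intros H1 H2. cbv zeta. intros k Hk.
  destruct (cd_F g1 g2 (zz u v) _ _ H1 H2) as (D1 & D2 & D3 & D4).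
  destruct Hk as [Hk|[Hk|[Hk|Hk]]]; subst k;
  [ destruct (partial_u _ _ _ _ D1) as [U1 U2]; destruct (partial_v _ _ _ _ D1) as [V1 V2]
  | destruct (partial_u _ _ _ _ D2) as [U1 U2]; destruct (partial_v _ _ _ _ D2) as [V1 V2]
  | destruct (partial_u _ _ _ _ D3) as [U1 U2]; destruct (partial_v _ _ _ _ D3) as [V1 V2]
  | destruct (partial_u _ _ _ _ D4) as [U1 U2]; destruct (partial_v _ _ _ _ D4) as [V1 V2] ];
  (split; [|split; [|split]]);
  (eapply is_derive_ext; [intros t; first [rewrite RV_F | rewrite IV_F]; reflexivity|]);
  first [rewrite RW_G | rewrite IW_G];
  cbv [scal4 mk4 Defs.c1 Defs.c2 Defs.c3 Defs.c4 fst snd];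
  first [exact U1 | exact U2 | exact V1 | exact V2 | (match goal with |- is_derive _ _ (?a * ?b) => replace (a*b) with (- b) by ring end; exact V1)].
Qed.

Lemma normal_rel (D : C -> Prop) (g1 g2 dg1 dg2 : C -> C) (n : R -> R -> V4) u v :
  open D -> D (zz u v) ->
  has_cderiv g1 (zz u v) (dg1 (zz u v)) -> has_cderiv g2 (zz u v) (dg2 (zz u v)) ->
  partials_exist n u v ->
  (forall u' v', D (zz u' v') ->
     dot4 (n u' v') (RVc (g1 (zz u' v')) (g2 (zz u' v'))) = 0 /\
     dot4 (n u' v') (IVc (g1 (zz u' v')) (g2 (zz u' v'))) = 0) ->
  let a := g1 (zz u v) in let b := g2 (zz u v) in
  let da := dg1 (zz u v) in let db := dg2 (zz u v) in
  dot4 (pu n u v) (RVc a b) + dot4 (n u v) (RWc a b da db) = 0 /\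
  dot4 (pu n u v) (IVc a b) + dot4 (n u v) (IWc a b da db) = 0 /\
  dot4 (pv n u v) (RVc a b) - dot4 (n u v) (IWc a b da db) = 0 /\
  dot4 (pv n u v) (IVc a b) + dot4 (n u v) (RWc a b da db) = 0.
Proof.
  intros HD Hz H1 H2 Hpe Horth. cbv zeta.
  destruct (n_deriv n u v Hpe) as [(NU1 & NU2 & NU3 & NU4) (NV1 & NV2 & NV3 & NV4)].
  pose proof (V_deriv g1 g2 dg1 dg2 u v H1 H2) as VD. cbv zeta in VD.
  destruct (VD 1%nat ltac:(tauto)) as (A1 & B1 & C1 & E1).
  destruct (VD 2%nat ltac:(tauto)) as (A2 & B2 & C2 & E2).
  destruct (VD 3%nat ltac:(tauto)) as (A3 & B3 & C3 & E3).
  destruct (VD 4%nat ltac:(tauto)) as (A4 & B4 & C4 & E4).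
  cbv beta iota in A1, B1, C1, E1, A2, B2, C2, E2, A3, B3, C3, E3, A4, B4, C4, E4.
  pose proof (loc_u D u v HD Hz) as LU. pose proof (loc_v D u v HD Hz) as LV.
  split; [|split; [|split]].
  - eapply deriv_zero_loc.
    + apply (is_derive_dot4 (fun t => n t v) (fun t => RVc (g1 (zz t v)) (g2 (zz t v)))); assumption.
    + eapply filter_imp; [|exact LU]. intros t Ht. apply (Horth t v Ht).
  - eapply deriv_zero_loc.
    + apply (is_derive_dot4 (fun t => n t v) (fun t => IVc (g1 (zz t v)) (g2 (zz t v)))); assumption.
    + eapply filter_imp; [|exact LU]. intros t Ht. apply (Horth t v Ht).
  - match goal with |- ?A - dot4 ?N ?W = 0 => replace (A - dot4 N W) with (A + dot4 N (scal4 (-1) W)) by (rewrite dot_scal_r; ring) end.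
    eapply deriv_zero_loc.
    + apply (is_derive_dot4 (fun t => n u t) (fun t => RVc (g1 (zz u t)) (g2 (zz u t)))); assumption.
    + eapply filter_imp; [|exact LV]. intros t Ht. apply (Horth u t Ht).
  - eapply deriv_zero_loc.
    + apply (is_derive_dot4 (fun t => n u t) (fun t => IVc (g1 (zz u t)) (g2 (zz u t)))); assumption.
    + eapply filter_imp; [|exact LV]. intros t Ht. apply (Horth u t Ht).
Qed.
Theorem mainTheorem5
  (D : C -> Prop) (g1 g2 dg1 dg2 s p1 p2 p3 p4 : C -> C)
  (HD : is_domain D)
  (Hg1 : forall z, D z -> has_cderiv g1 z (dg1 z))
  (Hg2 : forall z, D z -> has_cderiv g2 z (dg2 z))
  (Hnz : forall z, D z -> (dg1 z * dg2 z)%C <> 0%C)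
  (Hs : holomorphic_on D s)
  (Hs2 : forall z, D z -> (s z * s z)%C = (dg1 z * dg2 z)%C)
  (Hp1 : forall z, D z -> has_cderiv p1 z (Ci / 2 * ((g1 z * g2 z + 1) / s z))%C)
  (Hp2 : forall z, D z -> has_cderiv p2 z (/ 2 * ((g1 z * g2 z - 1) / s z))%C)
  (Hp3 : forall z, D z -> has_cderiv p3 z (/ 2 * ((g1 z + g2 z) / s z))%C)
  (Hp4 : forall z, D z -> has_cderiv p4 z (Ci / 2 * ((g1 z - g2 z) / s z))%C) :
  let x : R -> R -> V4 := fun u v =>
    let z := (RtoC u + Ci * RtoC v)%C in
    mk4 (Re (p1 z)) (Re (p2 z)) (Re (p3 z)) (Re (p4 z)) in
  let P : R -> R -> Prop := fun u v => D (RtoC u + Ci * RtoC v)%C in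
  (forall u v, P u v ->
     let z := (RtoC u + Ci * RtoC v)%C in
     ffF x u v = 0 /\ ffG x u v = ffE x u v /\
     ffE x u v = (Cmod (g1 z) ^ 2 + 1) * (Cmod (g2 z) ^ 2 + 1)
                 / (4 * Cmod (dg1 z * dg2 z)%C)) /\
  (forall n1 n2 : R -> R -> V4, normal_frame P x n1 n2 ->
   forall u v, P u v ->
     let z := (RtoC u + Ci * RtoC v)%C in
     let a1 := Cmod (g1 z) ^ 2 + 1 in
     let a2 := Cmod (g2 z) ^ 2 + 1 in
     let m := Cmod (dg1 z * dg2 z)%C in
     gauss_curvature x n1 n2 u v =
       (-8 * m) / (a1 * a2) * (Cmod (dg1 z) ^ 2 / a1 ^ 2 + Cmod (dg2 z) ^ 2 / a2 ^ 2) /\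
     normal_curvature x n1 n2 u v =
       (8 * m) / (a1 * a2) * (Cmod (dg1 z) ^ 2 / a1 ^ 2 - Cmod (dg2 z) ^ 2 / a2 ^ 2)).
Proof.
  intros x P.
  destruct HD as [HDo _].
  assert (Hsnz : forall z, D z -> s z <> 0%C).
  { intros z Hz E. apply (Hnz z Hz). rewrite <- (Hs2 z Hz), E. apply C_ext; simpl; ring. }
  assert (Hpu : forall u v, D (zz u v) -> pu x u v =
     lin2 (Re (/ s (zz u v))%C) (RVc (g1 (zz u v)) (g2 (zz u v)))
          (- Im (/ s (zz u v))%C) (IVc (g1 (zz u v)) (g2 (zz u v)))).
  { intros u v Hz. rewrite <- Phi_P. unfold pu. f_equal.
    - exact (Derive_u_re p1 u v _ (Hp1 _ Hz)).
    - exact (Derive_u_re p2 u v _ (Hp2 _ Hz)).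
    - exact (Derive_u_re p3 u v _ (Hp3 _ Hz)).
    - exact (Derive_u_re p4 u v _ (Hp4 _ Hz)). }
  assert (Hpv : forall u v, D (zz u v) -> pv x u v =
     lin2 (- Im (/ s (zz u v))%C) (RVc (g1 (zz u v)) (g2 (zz u v)))
          (- Re (/ s (zz u v))%C) (IVc (g1 (zz u v)) (g2 (zz u v)))).
  { intros u v Hz. rewrite <- Phi_Q. unfold pv. f_equal.
    - exact (Derive_v_re p1 u v _ (Hp1 _ Hz)).
    - exact (Derive_v_re p2 u v _ (Hp2 _ Hz)).
    - exact (Derive_v_re p3 u v _ (Hp3 _ Hz)).
    - exact (Derive_v_re p4 u v _ (Hp4 _ Hz)). }
  assert (HT : forall z, D z -> Re (/ s z)%C ^ 2 + Im (/ s z)%C ^ 2 = / (Re (s z) ^ 2 + Im (s z) ^ 2)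
             /\ 0 < Re (s z) ^ 2 + Im (s z) ^ 2).
  { intros z Hz. split; [apply inv_mod, Hsnz, Hz | apply C_nz, Hsnz, Hz]. }
  assert (HL : forall u v, D (zz u v) ->
     dot4 (pu x u v) (pu x u v) =
       (Re (g1 (zz u v)) ^ 2 + Im (g1 (zz u v)) ^ 2 + 1) * (Re (g2 (zz u v)) ^ 2 + Im (g2 (zz u v)) ^ 2 + 1)
       * (Re (/ s (zz u v))%C ^ 2 + Im (/ s (zz u v))%C ^ 2) / 4 /\
     dot4 (pv x u v) (pv x u v) =
       (Re (g1 (zz u v)) ^ 2 + Im (g1 (zz u v)) ^ 2 + 1) * (Re (g2 (zz u v)) ^ 2 + Im (g2 (zz u v)) ^ 2 + 1)
       * (Re (/ s (zz u v))%C ^ 2 + Im (/ s (zz u v))%C ^ 2) / 4 /\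
     dot4 (pu x u v) (pv x u v) = 0).
  { intros u v Hz. rewrite (Hpu u v Hz), (Hpv u v Hz). unfold RVc, IVc. apply dotP. }
  assert (HLpos : forall u v, D (zz u v) -> 0 <
       (Re (g1 (zz u v)) ^ 2 + Im (g1 (zz u v)) ^ 2 + 1) * (Re (g2 (zz u v)) ^ 2 + Im (g2 (zz u v)) ^ 2 + 1)
       * (Re (/ s (zz u v))%C ^ 2 + Im (/ s (zz u v))%C ^ 2) / 4).
  { intros u v Hz. destruct (HT (zz u v) Hz) as [T1 T2]. rewrite T1.
    pose proof (pow2_ge_0 (Re (g1 (zz u v)))); pose proof (pow2_ge_0 (Im (g1 (zz u v)))).
    pose proof (pow2_ge_0 (Re (g2 (zz u v)))); pose proof (pow2_ge_0 (Im (g2 (zz u v)))).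
    pose proof (Rinv_0_lt_compat _ T2).
    apply Rmult_lt_0_compat; [|lra]. apply Rmult_lt_0_compat; [|assumption]. apply Rmult_lt_0_compat; lra. }
  split.
  { intros u v Hz. cbv zeta. change (RtoC u + Ci * RtoC v)%C with (zz u v) in *.
    destruct (HL u v Hz) as (E1 & E2 & E3). unfold ffF, ffG, ffE. rewrite E1, E2, E3.
    split; [reflexivity|]. split; [reflexivity|].
    destruct (HT (zz u v) Hz) as [T1 T2]. rewrite T1.
    rewrite <- (Hs2 (zz u v) Hz), Cmod_mult, !Cmod2.
    replace (Cmod (s (zz u v)) * Cmod (s (zz u v))) with (Cmod (s (zz u v)) ^ 2) by ring.
    rewrite Cmod2. field. lra. }
  intros n1 n2 Hnf u v Hz. cbv zeta. change (RtoC u + Ci * RtoC v)%C with (zz u v) in *.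
  assert (Horth : forall n, n = n1 \/ n = n2 -> forall u' v', D (zz u' v') ->
     dot4 (n u' v') (RVc (g1 (zz u' v')) (g2 (zz u' v'))) = 0 /\
     dot4 (n u' v') (IVc (g1 (zz u' v')) (g2 (zz u' v'))) = 0).
  { intros n Hn u' v' Hz'.
    destruct (Hnf u' v' Hz') as (_ & _ & _ & a1 & a2 & a3 & a4 & _).
    assert (Hx : dot4 (n u' v') (X1 x u' v') = 0 /\ dot4 (n u' v') (X2 x u' v') = 0)
      by (destruct Hn; subst n; tauto).
    destruct Hx as [Hx1 Hx2].
    destruct (HL u' v' Hz') as (E1 & E2 & _). pose proof (HLpos u' v' Hz') as Lp.
    unfold X1, X2, norm4 in Hx1, Hx2. rewrite dot_scal_r in Hx1, Hx2.
    rewrite E1 in Hx1. rewrite E2 in Hx2.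
    assert (Sq : / sqrt ((Re (g1 (zz u' v')) ^ 2 + Im (g1 (zz u' v')) ^ 2 + 1) *
       (Re (g2 (zz u' v')) ^ 2 + Im (g2 (zz u' v')) ^ 2 + 1) *
       (Re (/ s (zz u' v'))%C ^ 2 + Im (/ s (zz u' v'))%C ^ 2) / 4) <> 0).
    { apply Rinv_neq_0_compat. apply Rgt_not_eq. apply sqrt_lt_R0. exact Lp. }
    assert (Y1 : dot4 (n u' v') (pu x u' v') = 0).
    { apply (Rmult_eq_reg_l _ _ _ (eq_trans Hx1 (eq_sym (Rmult_0_r _))) Sq). }
    assert (Y2 : dot4 (n u' v') (pv x u' v') = 0).
    { apply (Rmult_eq_reg_l _ _ _ (eq_trans Hx2 (eq_sym (Rmult_0_r _))) Sq). }
    rewrite (Hpu u' v' Hz'), dot_lin2 in Y1. rewrite (Hpv u' v' Hz'), dot_lin2 in Y2.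
    destruct (HT _ Hz') as [T1 T2]. pose proof (Rinv_0_lt_compat _ T2) as T3. rewrite <- T1 in T3.
    revert Y1 Y2 T3.
    generalize (dot4 (n u' v') (RVc (g1 (zz u' v')) (g2 (zz u' v')))),
               (dot4 (n u' v') (IVc (g1 (zz u' v')) (g2 (zz u' v')))),
               (Re (/ s (zz u' v'))%C), (Im (/ s (zz u' v'))%C).
    intros A B c d Y1 Y2 T3.
    assert (A * (c ^ 2 + d ^ 2) = 0) by (replace (A * (c ^ 2 + d ^ 2)) with (c * (c * A + - d * B) - d * (- d * A + - c * B)) by ring; rewrite Y1, Y2; ring).
    assert (B * (c ^ 2 + d ^ 2) = 0) by (replace (B * (c ^ 2 + d ^ 2)) with (- d * (c * A + - d * B) - c * (- d * A + - c * B)) by ring; rewrite Y1, Y2; ring).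
    split; [apply Rmult_integral in H | apply Rmult_integral in H0]; lra. }
  destruct (Hnf u v Hz) as (N11 & N22 & N12 & N1X1 & N1X2 & N2X1 & N2X2 & Ndet & PE1 & PE2).
  pose proof (normal_rel D g1 g2 dg1 dg2 n1 u v HDo Hz (Hg1 _ Hz) (Hg2 _ Hz) PE1 (Horth n1 (or_introl eq_refl))) as R1.
  pose proof (normal_rel D g1 g2 dg1 dg2 n2 u v HDo Hz (Hg1 _ Hz) (Hg2 _ Hz) PE2 (Horth n2 (or_intror eq_refl))) as R2.
  cbv zeta in R1, R2.
  destruct (HL u v Hz) as (E1 & E2 & E3). pose proof (HLpos u v Hz) as Lp.
  pose proof (Hpu u v Hz) as Hpu0. pose proof (Hpv u v Hz) as Hpv0.
  set (a := g1 (zz u v)) in *. set (b := g2 (zz u v)) in *.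
  set (da := dg1 (zz u v)) in *. set (db := dg2 (zz u v)) in *.
  set (c := Re (/ s (zz u v))%C) in *. set (d := Im (/ s (zz u v))%C) in *.
  set (L := (Re a ^ 2 + Im a ^ 2 + 1) * (Re b ^ 2 + Im b ^ 2 + 1) * (c ^ 2 + d ^ 2) / 4) in *.
  set (RU := lin2 c (RWc a b da db) (- d) (IWc a b da db)).
  set (IU := lin2 d (RWc a b da db) c (IWc a b da db)).
  assert (Hn : forall n, n = n1 \/ n = n2 ->
    dot4 (pu n u v) (pu x u v) = - dot4 (n u v) RU /\ dot4 (pu n u v) (pv x u v) = dot4 (n u v) IU /\
    dot4 (pv n u v) (pu x u v) = dot4 (n u v) IU /\ dot4 (pv n u v) (pv x u v) = dot4 (n u v) RU).
  { intros n Hn.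
    assert (R : dot4 (pu n u v) (RVc a b) + dot4 (n u v) (RWc a b da db) = 0 /\
      dot4 (pu n u v) (IVc a b) + dot4 (n u v) (IWc a b da db) = 0 /\
      dot4 (pv n u v) (RVc a b) - dot4 (n u v) (IWc a b da db) = 0 /\
      dot4 (pv n u v) (IVc a b) + dot4 (n u v) (RWc a b da db) = 0) by (destruct Hn; subst n; assumption).
    destruct R as (r1 & r2 & r3 & r4).
    rewrite Rplus_comm in r1, r2, r4. apply Rplus_opp_r_uniq in r1, r2, r4. apply Rminus_diag_uniq in r3.
    rewrite Hpu0, Hpv0. unfold RU, IU. rewrite !dot_lin2, r1, r2, r3, r4.
    repeat split; ring. }
  destruct (curv_alg x n1 n2 u v (pu x u v) (pv x u v) RU IU L eq_refl eq_refl E1 E2 E3 Lp Hn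
      N11 N22 N12 N1X1 N1X2 N2X1 N2X2 Ndet) as [G K].
  rewrite G, K. clear G K.
  rewrite Hpu0, Hpv0.
  pose proof (Kcore (Re a) (Im a) (Re b) (Im b) (Re da) (Im da) (Re db) (Im db) c d) as KC.
  pose proof (Dcore (Re a) (Im a) (Re b) (Im b) (Re da) (Im da) (Re db) (Im db) c d) as DC.
  pose proof (dotP (Re a) (Im a) (Re b) (Im b) c d) as DP.
  cbv zeta in KC, DC, DP. destruct DP as (DP1 & _ & _). rewrite DP1 in KC.
  unfold L, RU, IU, RVc, IVc, RWc, IWc. rewrite KC, DC.
  destruct (HT (zz u v) Hz) as [T1 T2].
  fold c d in T1. rewrite T1.
  change (da * db)%C with (dg1 (zz u v) * dg2 (zz u v))%C.
  rewrite <- (Hs2 (zz u v) Hz), Cmod_mult, !Cmod2.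
  replace (Cmod (s (zz u v)) * Cmod (s (zz u v))) with (Cmod (s (zz u v)) ^ 2) by ring.
  rewrite Cmod2.
  pose proof (pow2_ge_0 (Re a)); pose proof (pow2_ge_0 (Im a)).
  pose proof (pow2_ge_0 (Re b)); pose proof (pow2_ge_0 (Im b)).
  split; field; lra.
Qed.
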